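(* Let $n=2$ and $\varphi\in\mathcal{M}$ be a matching. Then there exists a matching mechanism that is resolute, $\langle\varphi\rangle$-symmetric and stable.
   Context: Let $W=\{1,2\}$ (women), $M=\{3,4\}$ (men), $I=W\cup M$. Permutations compose right-to-left. A preference profile is a function $p$ on $I$ assigning to each $x\in W$ a linear order $p(x)$ on $M$ and to each $y\in M$ a linear order $p(y)$ on $W$; $\mathcal{P}$ is the set of preference profiles. A matching is a permutation $\mu$ of $I$ with $\mu(W)=M$, $\mu(M)=W$ and $\mu(\mu(z))=z$ for all $z\in I$; $\mathcal{M}$ is the set of matchings. $\mu$ is stable for $p$ if there is no $(x,y)\in W\times M$ with $y\succ_{p(x)}\mu(x)$ and $x\succ_{p(y)}\mu(y)$. Let $G^*=\{\psi\in\mathrm{Sym}(I):\{\psi(W),\psi(M)\}=\{W,M\}\}$. For a linear order $R$ on $X\subseteq I$ and $\psi\in\mathrm{Sym}(I)$, $\psi R$ is the relation on $\psi(X)$ with $(a,b)\in\psi R$ iff $(\psi^{-1}(a),\psi^{-1}(b))\in R$. For $p\in\mathcal{P}$, $\psi\in G^*$, $p^\psi(z)=\psi\,p(\psi^{-1}(z))$. For a permutation $\mu$, $\mu^\psi=\psi\mu\psi^{-1}$; $S^\psi=\{\mu^\psi:\mu\in S\}$. A matching mechanism is a correspondence $F$ from $\mathcal{P}$ to $\mathcal{M}$; it is resolute if $|F(p)|=1$ for all $p$; stable if every element of $F(p)$ is stable for $p$, for all $p$; for $U\subseteq G^*$ it is $U$-symmetric if $F(p^\psi)=F(p)^\psi$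 for all $p\in\mathcal{P}$, $\psi\in U$. $\langle\varphi\rangle=\{id_I,\varphi\}$. *)

(* Defs.v *)
From HB Require Import structures.
From mathcomp Require Import all_boot fingroup perm.
Set Implicit Arguments. Unset Strict Implicit. Unset Printing Implicit Defensive.

(* Agents: I = {1,2,3,4} is encoded as 'I_4, paper's agent k being ordinal k-1.
   Women W = {1,2} ~ {0,1}, men M = {3,4} ~ {2,3}. *)
Definition I := 'I_4.
Definition W : {set I} := [set i : I | (i < 2)%N].
Definition M : {set I} := [set i : I | (2 <= i)%N].

Definition linear_order_on (X : {set I}) (R : rel I) : Prop :=
  [/\ (forall a b, R a b -> a \in X /\ b \in X),
      (forall a, a \in X -> R a a),
      (forall a b, R a b -> R b a -> a = b),
      (forall a b c, R a b -> R b c -> R a c)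
    & (forall a b, a \in X -> b \in X -> R a b \/ R b a)].

Definition strictly (R : rel I) (a b : I) : bool := R a b && (a != b).

Definition profile := I -> rel I.
Definition is_profile (p : profile) : Prop :=
  (forall x, x \in W -> linear_order_on M (p x)) /\
  (forall y, y \in M -> linear_order_on W (p y)).

Definition is_matching (mu : {perm I}) : Prop :=
  [/\ mu @: W = M, mu @: M = W & forall z, mu (mu z) = z].

Definition stable (p : profile) (mu : {perm I}) : Prop :=
  ~ (exists x y, [/\ x \in W, y \in M,
                     strictly (p x) y (mu x) & strictly (p y) x (mu y)]).

Definition Gstar : {set {perm I}} :=
  [set psi : {perm I} | [set psi @: W; psi @: M] == [set W; M]].

Definition act_rel (psi : {perm I}) (R : rel I) : rel I :=
  fun a b => R (psi^-1%g a) (psi^-1%g b).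

Definition act_profile (psi : {perm I}) (p : profile) : profile :=
  fun z => act_rel psi (p (psi^-1%g z)).

(* mu^psi = psi mu psi^-1 (right-to-left composition).  MathComp's product
   of permutations is left-to-right, so this is (psi^-1 * mu * psi)%g. *)
Definition conjm (psi mu : {perm I}) : {perm I} := (psi^-1 * mu * psi)%g.

Lemma conjmE psi mu z : conjm psi mu z = psi (mu (psi^-1%g z)).
Proof. by rewrite /conjm !permM. Qed.

Definition conjset (psi : {perm I}) (S : {set {perm I}}) : {set {perm I}} :=
  [set conjm psi mu | mu in S].

Definition mechanism := profile -> {set {perm I}}.

Definition is_mechanism (F : mechanism) : Prop :=
  forall p, is_profile p -> forall mu, mu \in F p -> is_matching mu.

Definition resolute (F : mechanism) : Prop :=
  forall p, is_profile p -> #|F p| = 1%N.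

Definition stable_mech (F : mechanism) : Prop :=
  forall p, is_profile p -> forall mu, mu \in F p -> stable p mu.

Definition U_symmetric (U : {set {perm I}}) (F : mechanism) : Prop :=
  forall p psi, is_profile p -> psi \in U ->
    F (act_profile psi p) = conjset psi (F p).

Definition gen2 (phi : {perm I}) : {set {perm I}} := [set 1%g; phi].

(* Main.v *)
Require Import Defs.
From mathcomp Require Import all_boot fingroup perm.

Definition o0 : I := @Ordinal 4 0 isT.
Definition o1 : I := @Ordinal 4 1 isT.
Definition o2 : I := @Ordinal 4 2 isT.
Definition o3 : I := @Ordinal 4 3 isT.

Lemma I_cases (z : I) : z = o0 \/ z = o1 \/ z = o2 \/ z = o3.
Proof.
case: z => [[|[|[|[|n]]]] Hz].
- by left; apply/val_inj.
- by right; left; apply/val_inj.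
- by right; right; left; apply/val_inj.
- by right; right; right; apply/val_inj.
- by [].
Qed.

Definition f1 (z : I) : I := match val z with 0 => o2 | 1 => o3 | 2 => o0 | _ => o1 end.
Definition f2 (z : I) : I := match val z with 0 => o3 | 1 => o2 | 2 => o1 | _ => o0 end.

Lemma f1_inj : injective f1.
Proof.
move=> x y; case: (I_cases x) => [->|[->|[->|->]]]; case: (I_cases y) => [->|[->|[->|->]]] //=;
  by move=> /(congr1 val).
Qed.
Lemma f2_inj : injective f2.
Proof.
move=> x y; case: (I_cases x) => [->|[->|[->|->]]]; case: (I_cases y) => [->|[->|[->|->]]] //=;
  by move=> /(congr1 val).
Qed.

Definition mu1 : {perm I} := perm f1_inj.
Definition mu2 : {perm I} := perm f2_inj.

Lemma inWM (z : I) : (z \in M) = ~~ (z \in W).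
Proof. by rewrite !inE -leqNgt. Qed.

Lemma match_of (mu : {perm I}) : (forall z, mu (mu z) = z) ->
  (forall z, (mu z \in M) = (z \in W)) -> is_matching mu.
Proof.
move=> Hi Hm.
have Hw : forall z, (mu z \in W) = (z \in M).
  by move=> z; apply/negb_inj; rewrite -inWM Hm inWM negbK.
split => //.
- apply/setP=> y; apply/imsetP/idP => [[x xW ->]|yM]; first by rewrite Hm.
  by exists (mu y); [rewrite -Hm Hi | rewrite Hi].
- apply/setP=> y; apply/imsetP/idP => [[x xW ->]|yM]; first by rewrite Hw.
  by exists (mu y); [rewrite -Hw Hi | rewrite Hi].
Qed.

Lemma mu1_matching : is_matching mu1.
Proof.
apply: match_of => z; rewrite !permE;
  by case: (I_cases z) => [->|[->|[->|->]]]; rewrite ?permE ?inE.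
Qed.
Lemma mu2_matching : is_matching mu2.
Proof.
apply: match_of => z; rewrite !permE;
  by case: (I_cases z) => [->|[->|[->|->]]]; rewrite ?permE ?inE.
Qed.

Definition blocking (p : profile) (mu : {perm I}) (x y : I) : bool :=
  [&& x \in W, y \in M, strictly (p x) y (mu x) & strictly (p y) x (mu y)].
Definition stableb (p : profile) (mu : {perm I}) : bool :=
  [forall x, forall y, ~~ blocking p mu x y].

Lemma stablebP p mu : stableb p mu -> stable p mu.
Proof.
move=> /forallP H [x [y [Hx Hy H1 H2]]].
by have := forallP (H x) y; rewrite /blocking Hx Hy H1 H2.
Qed.

Lemma Lsym (psi : {perm I}) (p q : profile) (mu : {perm I}) :
  (forall z a b, q z a b = p (psi z) (psi a) (psi b)) -> psi @: W = M -> psi @: M = W ->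
  (forall z, psi (mu z) = mu (psi z)) -> stableb q mu -> stableb p mu.
Proof.
move=> Hq HW HM Hc /forallP H.
apply/forallP=> x; apply/forallP=> y; apply/negP => /and4P [xW yM b1 b2].
have := xW; rewrite -HM => /imsetP [v vM Ex].
have := yM; rewrite -HW => /imsetP [w wW Ey].
subst x y.
have := forallP (H w) v.
rewrite /blocking wW vM /strictly !Hq !Hc -(inj_eq (@perm_inj _ psi) v) -(inj_eq (@perm_inj _ psi) w) !Hc.
by move: b1 b2; rewrite /strictly => -> ->.
Qed.

Lemma antis {p : profile} : is_profile p -> forall {z a b}, p z a b -> p z b a -> a = b.
Proof.
move=> [HW HM] z a b h1 h2.
case: (boolP (z \in W)) => zW.
  by case: (HW z zW) => _ _ A _ _; apply: A.
by rewrite -inWM in zW; case: (HM z zW) => _ _ A _ _; apply: A.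
Qed.

Lemma GS (p : profile) : is_profile p -> stableb p mu1 || stableb p mu2.
Proof.
move=> Hp; rewrite /stableb; case: (boolP [forall x, forall y, ~~ blocking p mu1 x y]) => //= /forallPn [x /forallPn [y /negPn B1]].
apply/forallP => x'; apply/forallP => y'; apply/negP => B2.
move: B1 => /and4P [xW yM /andP [h1 n1] /andP [h2 n2]].
move: B2 => /and4P [xW' yM' /andP [h3 n3] /andP [h4 n4]].
move: xW yM n1 n2 h1 h2; rewrite !permE /f1.
case: (I_cases x) => [->|[->|[->|->]]]; case: (I_cases y) => [->|[->|[->|->]]];
  rewrite ?inE //= => _ _ _ _ h1 h2;
move: xW' yM' n3 n4 h3 h4; rewrite !permE /f2;
case: (I_cases x') => [->|[->|[->|->]]]; case: (I_cases y') => [->|[->|[->|->]]];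
  rewrite ?inE //= => _ _ _ _ h3 h4.
- have := antis Hp h1 h3. by move=> /(congr1 val).
- have := antis Hp h2 h4. by move=> /(congr1 val).
- have := antis Hp h2 h4. by move=> /(congr1 val).
- have := antis Hp h1 h3. by move=> /(congr1 val).
Qed.

Lemma phiV {phi : {perm I}} : is_matching phi -> phi^-1%g = phi.
Proof.
case=> _ _ Hi; apply/permP => z.
by rewrite -{1}(Hi z) permK.
Qed.

Lemma phi_cases (phi : {perm I}) : is_matching phi -> phi = mu1 \/ phi = mu2.
Proof.
case=> HW HM Hi.
have h0 : phi o0 \in M by rewrite -HW; apply: imset_f; rewrite inE.
have h1 : phi o1 \in M by rewrite -HW; apply: imset_f; rewrite inE.
have hne : phi o0 != phi o1 by rewrite (inj_eq perm_inj).
have i0 := Hi o0; have i1 := Hi o1.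
have [E0|[E0|[E0|E0]]] := I_cases (phi o0); have [E1|[E1|[E1|E1]]] := I_cases (phi o1);
  rewrite ?E0 ?E1 ?inE in h0 h1 hne i0 i1; try done.
- left; apply/permP => z; rewrite permE /f1.
  by case: (I_cases z) => [->|[->|[->|->]]] /=.
- right; apply/permP => z; rewrite permE /f2.
  by case: (I_cases z) => [->|[->|[->|->]]] /=.
Qed.

Lemma mu_comm (a b : {perm I}) : (a = mu1 \/ a = mu2) -> (b = mu1 \/ b = mu2) ->
  forall z, a (b z) = b (a z).
Proof.
by move=> [->|->] [->|->] z; rewrite !permE /f1 /f2;
  case: (I_cases z) => [->|[->|[->|->]]] /=.
Qed.

Lemma stab_sym (phi mu : {perm I}) (p : profile) : is_matching phi ->
  (forall z, phi (mu z) = mu (phi z)) ->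
  stableb (act_profile phi p) mu = stableb p mu.
Proof.
move=> Hm Hc; have HV := phiV Hm; case: (Hm) => HW HM _.
apply/idP/idP.
- apply: (@Lsym phi) => // z a b; by rewrite /act_profile /act_rel HV.
- apply: (@Lsym phi) => // z a b; by rewrite /act_profile /act_rel !permK.
Qed.

Lemma conj_fix (phi mu : {perm I}) : is_matching phi ->
  (forall z, phi (mu z) = mu (phi z)) -> conjm phi mu = mu.
Proof.
move=> Hm Hc; apply/permP => z; rewrite conjmE (phiV Hm) Hc.
by case: Hm => _ _ ->.
Qed.

Theorem theorem7 (phi : {perm I}) (Hphi : is_matching phi) :
  exists F : mechanism,
    [/\ is_mechanism F, resolute F, U_symmetric (gen2 phi) F & stable_mech F].
Proof.
exists (fun p => if stableb p mu1 then [set mu1] else [set mu2]).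
have Hph := phi_cases _ Hphi.
split.
- move=> p _ mu; case: ifP => _; rewrite inE => /eqP ->.
  + exact: mu1_matching.
  + exact: mu2_matching.
- by move=> p _; case: ifP => _; rewrite cards1.
- move=> p psi Hp; rewrite !inE => /orP [/eqP ->|/eqP ->].
  + have E : forall mu, stableb (act_profile 1 p) mu = stableb p mu.
      move=> mu; apply: eq_forallb => x; apply: eq_forallb => y.
      by rewrite /blocking /strictly /act_profile /act_rel invg1 !perm1.
    have C : forall mu, conjset 1 [set mu] = [set mu].
      by move=> mu; rewrite /conjset imset_set1 /conjm invg1 mul1g mulg1.
    by rewrite E; case: ifP => _; rewrite C.
  + have C : forall mu, (mu = mu1 \/ mu = mu2) -> conjset phi [set mu] = [set mu].
      move=> mu Hmu; rewrite /conjset imset_set1 conj_fix //.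
      exact: mu_comm.
    rewrite stab_sym //; last by apply: mu_comm => //; left.
    by case: ifP => _; rewrite C //; auto.
- move=> p Hp mu; case: ifP => S; rewrite inE => /eqP ->; apply: stablebP => //.
  by have := GS _ Hp; rewrite S.
Qed.
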